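(* Let $r\ge 1$ be an integer and let $A$ be a finite totally ordered alphabet of digits whose smallest letter is $0$. Let $w_0,\ldots,w_{r-1}$ be $r$ non-empty words in $\mathsf{inc}(A^* )$ such that $\mathsf{s}=(w_0,\ldots,w_{r-1})^\omega$ is a purely periodic labeled signature, let $L(\mathsf{s})$ be the associated language and $\mathcal{S}=(L(\mathsf{s}),A,<)$ the associated abstract numeration system. Let $\mathcal{A}=(Q,q_0,A,\delta)$ be a deterministic finite automaton (with complete transition function $\delta:Q\times A\to Q$). For $i\in\{0,\ldots,r-1\}$ define the morphism $f_i:Q^*\to Q^*$ by $$f_i(q)=\delta(q,w_{i,0})\,\delta(q,w_{i,1})\cdots\delta(q,w_{i,|w_i|-1})\quad(q\in Q),$$ where $w_{i,j}$ is the $j$th letter of $w_i$ (indexed from $0$). Let $\mathbf{x}=x_0x_1\cdots$ be the alternating fixed point of $(f_0,\ldots,f_{r-1})$ starting with $q_0$ (i.e., with $x_0=q_0$). Then for all $n\ge 0$, $x_n=\delta(q_0,\mathrm{rep}_{\mathcal{S}}(n))$; that is, $\mathbf{x}$ is the sequence of states reached in $\mathcal{A}$ when reading the words of $L(\mathsf{s})$ in increasing radix order.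
   Context: $\mathsf{inc}(A^* )$ is the set of words over $A$ whose letters are in strictly increasing order. A purely periodic labeled signature is an infinite sequence $\mathsf{s}=(s_n)_{n\ge0}$ with $s_n=w_{n\bmod r}$, where each $w_i\in\mathsf{inc}(A^* )$ and $w_0=0y$ for some non-empty word $y$. It generates an infinite labeled tree (an ''i-tree'') as follows: nodes $v_0,v_1,v_2,\ldots$ are created in breadth-first order; $v_0$ is the root; the children of $v_n$ are reached by edges labeled by the letters of $s_n$ in increasing order, new children receiving the next unused indices in this order; for the root, the edge labeled $0$ is a loop from $v_0$ to itself, and the other letters of $s_0$ lead to $v_1,\ldots,v_{|s_0|-1}$; then the children of $v_1$, then of $v_2$, etc. The language $L(\mathsf{s})$ is the set of labels of paths from the root that do not start with $0$ (i.e., that do not use the loop); each node corresponds to exactly one word of $L(\mathsf{s})$, and $v_n$ corresponds to the $(n+1)$st word of $L(\mathsf{s})$ in radix order (words ordered first by length, then lexicographically). For the abstract numeration system $\mathcal{S}=(L(\mathsf{s}),A,<)$, $\mathrm{rep}_{\mathcal{S}}(n)$ is the $(n+1)$st word of $L(\mathsf{s})$ in radix order (so $\mathrm{rep}_{\mathcal{S}}(0)=\varepsilon$). An infinite word $\mathbf{x}=x_0x_1\cdots$ is an alternating fixed point of $(f_0,\ldots,f_{r-1})$ if $\mathbf{x}=f_0(x_0)f_1(x_1)\cdots f_{i\bmod r}(x_i)\cdots$. *)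

(* Defs.v *)
From mathcomp Require Import all_boot.
Set Implicit Arguments. Unset Strict Implicit. Unset Printing Implicit Defensive.

(* Letters of the alphabet A are natural numbers with their usual order;
   the smallest letter is 0. Words are seq nat. *)

Definition inc (w : seq nat) : bool := sorted ltn w.

Definition sig (ws : seq (seq nat)) (n : nat) : seq nat := nth [::] ws (n %% size ws).

(* number of children of node v_m in the i-tree (the root's 0-loop excluded) *)
Definition nchildren (ws : seq (seq nat)) (m : nat) : nat :=
  if m == 0 then (size (sig ws 0)).-1 else size (sig ws m).

(* index of the first child of v_m (children created in BFS order) *)
Definition start (ws : seq (seq nat)) (m : nat) : nat :=
  1 + \sum_(j < m) nchildren ws j.

(* the child of v_m along the edge labelled a (None if no such edge;
   the loop labelled 0 at the root is not an edge of the paths considered) *)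
Definition child (ws : seq (seq nat)) (m a : nat) : option nat :=
  if (a \in sig ws m) && ~~ ((m == 0) && (a == 0))
  then Some (start ws m + index a (sig ws m) - (m == 0))
  else None.

Definition run (ws : seq (seq nat)) (u : seq nat) : option nat :=
  foldl (fun o a => obind (fun k => child ws k a) o) (Some 0) u.

(* L(s): labels of paths from the root not using the loop *)
Definition inL (ws : seq (seq nat)) (u : seq nat) : bool := run ws u != None.

Fixpoint lexlt (u v : seq nat) : bool :=
  match u, v with
  | a :: u', b :: v' => (a < b) || ((a == b) && lexlt u' v')
  | _, _ => false
  end.

Definition radix_lt (u v : seq nat) : bool :=
  (size u < size v) || ((size u == size v) && lexlt u v).

Definition is_rep (ws : seq (seq nat)) (n : nat) (u : seq nat) : Prop :=
  inL ws u /\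
  exists l : seq (seq nat),
    [/\ uniq l, (forall v, (v \in l) = inL ws v && radix_lt v u) & size l = n].

(* the morphism f_i : q |-> delta(q, w_{i,0}) ... delta(q, w_{i,|w_i|-1})
   (index i taken mod r) *)
Definition morph (ws : seq (seq nat)) (Q : Type) (delta : Q -> nat -> Q)
  (i : nat) (q : Q) : seq Q := [seq delta q a | a <- sig ws i].

(* x = f_0(x_0) f_1(x_1) ... f_(i mod r)(x_i) ... : the block f_(i mod r)(x_i)
   occupies positions  sum_(k<i) |w_(k mod r)|  ...  *)
Definition alt_fp (ws : seq (seq nat)) (Q : Type) (delta : Q -> nat -> Q)
  (x : nat -> Q) : Prop :=
  forall i j, j < size (morph ws delta i (x i)) ->
    x (\sum_(k < i) size (sig ws k) + j) = nth (x i) (morph ws delta i (x i)) j.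

(* Main.v *)
Require Import Defs.
From mathcomp Require Import all_boot zify.
Set Implicit Arguments. Unset Strict Implicit.

Definition goodws (ws : seq (seq nat)) : Prop :=
  [/\ 0 < size ws, all (fun w => (w != [::]) && inc w) ws &
      exists y : seq nat, y != [::] /\ nth [::] ws 0 = 0 :: y].

Lemma sig_prop ws m : goodws ws -> (sig ws m != [::]) && inc (sig ws m).
Proof.
case=> Hs Ha _; rewrite /sig.
by move/allP: Ha; apply; apply: mem_nth; rewrite ltn_mod.
Qed.

Lemma sig_size ws m : goodws ws -> 0 < size (sig ws m).
Proof. by move=> G; case/andP: (sig_prop m G); case: (sig ws m). Qed.

Lemma sig_sorted ws m : goodws ws -> sorted ltn (sig ws m).
Proof. by move=> G; case/andP: (sig_prop m G). Qed.

Lemma sig0 ws : goodws ws -> exists y, y != [::] /\ sig ws 0 = 0 :: y.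
Proof. by case=> Hs _ [y [Hy E]]; exists y; rewrite /sig mod0n E. Qed.

Lemma nch_pos ws m : goodws ws -> 0 < nchildren ws m.
Proof.
move=> G; rewrite /nchildren; case: (m =P 0) => [E|_] /=; last exact: sig_size m G.
subst m.
by case: (sig0 G) => y [Hy ->]; case: y Hy.
Qed.

Lemma startS ws m : start ws m.+1 = start ws m + nchildren ws m.
Proof. by rewrite /start big_ord_recr /= addnA. Qed.

Lemma start0 ws : start ws 0 = 1.
Proof. by rewrite /start big_ord0. Qed.

Lemma start_sum ws m : goodws ws ->
  start ws m = \sum_(k < m) size (sig ws k) + (m == 0).
Proof.
move=> G; elim: m => [|m IH]; first by rewrite start0 big_ord0.
rewrite startS IH big_ord_recr /=.
case: m IH => [|m] IH /=; last by rewrite /nchildren /= !addn0.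
rewrite big_ord0 /nchildren /= add0n addn0.
by have := sig_size 0 G; case: (size _).
Qed.

Lemma start_gt ws m : goodws ws -> m < start ws m.
Proof.
move=> G; elim: m => [|m IH]; first by rewrite start0.
by rewrite startS; have := nch_pos m G; lia.
Qed.

Lemma start_mono ws m m' : goodws ws -> m < m' ->
  start ws m + nchildren ws m <= start ws m'.
Proof.
move=> G; elim: m' => [//|m' IH]; rewrite ltnS leq_eqVlt => /orP [/eqP ->|H].
  by rewrite startS.
by rewrite startS; have := IH H; lia.
Qed.

Lemma child_spec ws m a k : goodws ws -> child ws m a = Some k ->
  [/\ a \in sig ws m, (m == 0) <= index a (sig ws m),
      k = start ws m + index a (sig ws m) - (m == 0) &
      start ws m <= k < start ws m + nchildren ws m].
Proof.
move=> G; rewrite /child; case: ifP => // /andP [Ha Hn] [<-].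
have Hi : (m == 0) <= index a (sig ws m).
  case: eqP Hn => //= -> Hn; case: (sig0 G) => y [_ Ey].
  by rewrite Ey /= eq_sym; case: eqP Hn.
split => //.
have Hl : index a (sig ws m) < size (sig ws m) by rewrite index_mem.
rewrite /nchildren; case: (m =P 0) Hi => [E|NE] Hi.
  by subst m; rewrite /= in Hl Hi *; lia.
by rewrite /= in Hi *; lia.
Qed.

Lemma child_pos ws m a k : goodws ws -> child ws m a = Some k -> m < k.
Proof.
move=> G E; case: (child_spec G E) => _ _ _ /andP [H _].
by apply: leq_trans H; exact: start_gt m G.
Qed.

Lemma run_rcons ws u a :
  run ws (rcons u a) = obind (fun k => child ws k a) (run ws u).
Proof. by rewrite /run foldl_rcons. Qed.

Lemma run_x ws (Q : Type) (q0 : Q) delta x u k : goodws ws ->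
  alt_fp ws delta x -> x 0 = q0 -> run ws u = Some k -> x k = foldl delta q0 u.
Proof.
move=> G Hf H0; elim/last_ind: u k => [|u a IH] k.
  by rewrite /run /= => -[<-].
rewrite run_rcons foldl_rcons; case E: (run ws u) => [m|] //= Ec.
rewrite -(IH m E).
case: (child_spec G Ec) => Ha Hi -> _.
rewrite start_sum // addnAC addnK.
have Hl : index a (sig ws m) < size (sig ws m) by rewrite index_mem.
rewrite Hf; last by rewrite size_map.
rewrite (set_nth_default (delta (x m) 0)); last by rewrite size_map.
by rewrite (nth_map 0) // nth_index.
Qed.

Lemma lexlt_rcons u v a b : size u = size v ->
  lexlt (rcons u a) (rcons v b) = lexlt u v || ((u == v) && (a < b)).
Proof.
elim: u v => [|c u IH] [|d v] //=.
  by rewrite andbF orbF.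
move=> [Hs]; rewrite IH // eqseq_cons.
case: (ltngtP c d) => //= ->; by rewrite eqxx.
Qed.

Lemma radix_rcons u v a b :
  radix_lt (rcons u a) (rcons v b) = radix_lt u v || ((u == v) && (a < b)).
Proof.
rewrite /radix_lt !size_rcons ltnS eqSS.
case: (ltngtP (size u) (size v)) => Hs /=.
- by [].
- by apply/esym/negbTE; apply/negP => /andP [/eqP E _]; move: Hs; rewrite E ltnn.
- exact: lexlt_rcons.
Qed.

Lemma lexlt_total u v : size u = size v -> u != v -> lexlt u v || lexlt v u.
Proof.
elim: u v => [|c u IH] [|d v] //= [Hs]; rewrite eqseq_cons negb_and.
case: (ltngtP c d) => //= Ec; rewrite ?orbT //.
subst d; exact: IH.
Qed.

Lemma radix_total u v : u != v -> radix_lt u v || radix_lt v u.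
Proof.
rewrite /radix_lt => Ne; case: (ltngtP (size u) (size v)) => //= Hs.
by apply: lexlt_total.
Qed.

Lemma radix_irr u : radix_lt u u = false.
Proof.
rewrite /radix_lt ltnn eqxx /=; elim: u => //= a u ->.
by rewrite ltnn andbF.
Qed.

Definition rk ws u := odflt 0 (run ws u).

Lemma inL_run ws u : inL ws u -> run ws u = Some (rk ws u).
Proof. by rewrite /inL /rk; case: (run ws u). Qed.

Lemma inL_rcons ws u a : inL ws (rcons u a) -> inL ws u.
Proof. by rewrite /inL run_rcons; case: (run ws u). Qed.

Lemma child_rk ws u a : inL ws (rcons u a) ->
  child ws (rk ws u) a = Some (rk ws (rcons u a)).
Proof.
move=> H; have := inL_run H; rewrite run_rcons (inL_run (inL_rcons H)) /=.
by [].
Qed.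

Lemma rk_pos ws u a : goodws ws -> inL ws (rcons u a) -> 0 < rk ws (rcons u a).
Proof.
move=> G H; have := child_pos G (child_rk H); lia.
Qed.

Lemma idx_lt (s : seq nat) a b : sorted ltn s -> a \in s -> b \in s -> a < b ->
  index a s < index b s.
Proof.
move=> Hs Ha Hb Hab; rewrite ltnNge; apply/negP => H.
move: Hs; rewrite ltn_sorted_uniq_leq => /andP [_ Hs].
have := sorted_leq_index leq_trans leqnn Hs b a Hb Ha H; lia.
Qed.

Lemma rk_mono ws v : goodws ws -> forall u, inL ws u -> inL ws v ->
  radix_lt u v -> rk ws u < rk ws v.
Proof.
move=> G; elim/last_ind: v => [|v b IH] u Hu Hv Hlt.
  by case: u Hu Hlt; rewrite /radix_lt.
case/lastP: u Hu Hlt => [|u a] Hu Hlt.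
  by rewrite /rk /=; apply: rk_pos G Hv.
have Cu := child_rk Hu; have Cv := child_rk Hv.
case: (child_spec G Cu) => Ha Hia Eu /andP [Hu1 Hu2].
case: (child_spec G Cv) => Hb Hib Ev /andP [Hv1 Hv2].
rewrite radix_rcons in Hlt; case/orP: Hlt => [H | /andP [/eqP E Hab]].
  have := IH u (inL_rcons Hu) (inL_rcons Hv) H => Hm.
  have := start_mono G Hm; lia.
subst v; rewrite Eu Ev.
have := idx_lt (sig_sorted (rk ws u) G) Ha Hb Hab; lia.
Qed.

Lemma rk_inj ws u v : goodws ws -> inL ws u -> inL ws v -> rk ws u = rk ws v -> u = v.
Proof.
move=> G Hu Hv E; case: (eqVneq u v) => // Ne.
case/orP: (radix_total Ne) => H.
  by have := rk_mono G Hu Hv H; rewrite E ltnn.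
by have := rk_mono G Hv Hu H; rewrite E ltnn.
Qed.

Lemma locate ws N n : goodws ws -> 1 <= n < start ws N ->
  exists m, m < N /\ start ws m <= n < start ws m + nchildren ws m.
Proof.
move=> G; elim: N => [|N IH]; first by rewrite start0; lia.
rewrite startS => H; case: (ltnP n (start ws N)) => H2.
  by case: IH; [lia| move=> m [? ?]; exists m; split=> //; lia].
by exists N; split=> //; lia.
Qed.

Lemma child_exists ws m k : goodws ws -> k < nchildren ws m ->
  exists a, child ws m a = Some (start ws m + k).
Proof.
move=> G; rewrite /nchildren /child; case: (m =P 0) => [E|NE] Hk.
  subst m; case: (sig0 G) => y [_ Ey]; rewrite Ey /= in Hk *.
  have Hs := sig_sorted 0 G; rewrite Ey /= in Hs.
  have Hall := order_path_min ltn_trans Hs.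
  have Hy := path_sorted Hs.
  have Hu : uniq y by move: Hy; rewrite ltn_sorted_uniq_leq => /andP [].
  set a := nth 0 y k; have Ha : a \in y by apply: mem_nth.
  have Ha0 : 0 < a by move/allP: Hall; apply.
  exists a; rewrite in_cons Ha orbT /= (gtn_eqF Ha0) /=.
  rewrite eq_sym (gtn_eqF Ha0) /= index_uniq // start0; congr Some; lia.
have Hs := sig_sorted m G.
have Hu : uniq (sig ws m) by move: Hs; rewrite ltn_sorted_uniq_leq => /andP [].
set a := nth 0 (sig ws m) k; have Ha : a \in sig ws m by apply: mem_nth.
exists a; rewrite Ha /= index_uniq //=; lia.
Qed.

Lemma surj ws n : goodws ws -> exists u, run ws u = Some n.
Proof.
move=> G; elim/ltn_ind: n => n IH.
case: (posnP n) => [->|Hn]; first by exists [::].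
have [|m [Hm Hr]] := @locate ws n n G.
  by have := start_gt n G; lia.
case: (IH m Hm) => u Hu.
have [|a Ha] := @child_exists ws m (n - start ws m) G; first lia.
exists (rcons u a); rewrite run_rcons Hu /= Ha; congr Some; lia.
Qed.

Lemma build ws n : goodws ws -> exists l : seq (seq nat),
  [/\ uniq l, forall v, (v \in l) = inL ws v && (rk ws v < n) & size l = n].
Proof.
move=> G; elim: n => [|n [l [Hu Hm Hs]]].
  by exists [::]; split=> // v; rewrite andbF.
have [u Ru] := surj n G.
have Iu : inL ws u by rewrite /inL Ru.
have Ku : rk ws u = n by rewrite /rk Ru.
exists (u :: l); split=> /=; last by rewrite Hs.
  by rewrite Hu Hm Ku ltnn andbF.
move=> v; rewrite in_cons Hm; case: (eqVneq v u) => [->|Ne] /=.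
  by rewrite Iu Ku ltnSn.
case Iv: (inL ws v) => //=; case: (eqVneq (rk ws v) n) => E; last by move: E; lia.
by case/eqP: Ne; apply: rk_inj G Iv Iu _; rewrite Ku.
Qed.

Theorem mainTheorem3 (r : nat) (ws : seq (seq nat)) (Q : finType) (q0 : Q)
  (delta : Q -> nat -> Q) (x : nat -> Q) :
  1 <= r -> size ws = r ->
  all (fun w => (w != [::]) && inc w) ws ->
  (exists y : seq nat, y != [::] /\ nth [::] ws 0 = 0 :: y) ->
  alt_fp ws delta x -> x 0 = q0 ->
  forall n : nat, exists u : seq nat, is_rep ws n u /\ x n = foldl delta q0 u.
Proof.
move=> Hr Hs Ha Hy Hf H0 n.
have G : goodws ws by split=> //; rewrite Hs.
have [u Ru] := surj n G.
have Iu : inL ws u by rewrite /inL Ru.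
have Ku : rk ws u = n by rewrite /rk Ru.
exists u; split; last exact: run_x G Hf H0 Ru.
split=> //; have [l [Hu Hm Hl]] := build n G; exists l; split=> // v.
rewrite Hm; case Iv: (inL ws v) => //=.
apply/idP/idP => H; last by rewrite -Ku; exact: (@rk_mono ws u G v Iv Iu H).
have Ne : v != u by apply/eqP => E; move: H; rewrite E Ku ltnn.
case/orP: (radix_total Ne) => // H2.
by have := @rk_mono ws v G u Iu Iv H2; rewrite Ku; lia.
Qed.
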